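(* Let $G$ be a connected interval graph with a fixed interval representation in which all right endpoints are distinct, and let $V_2=\{w_1,\dots,w_{|V_2|}\}$ and $C_1,\dots,C_{|V_2|}$ be as defined in the context. Then for every dominating set $D$ of $G$ and every $i\in\{1,\dots,|V_2|\}$, $|D\cap C_i|\ge1$. Consequently (since $V_2\cap C_i=\{w_i\}$ and the $C_i$ partition $V(G)$), $V_2$ is a minimum dominating set of $G$.
   Context: $G$ is given by closed intervals $I_v=[l(v),r(v)]$, $v\in V(G)$, with $uv\in E(G)$ iff $I_u\cap I_v\ne\emptyset$. Labeling procedure, repeated until all vertices are labeled: (1) pick the unlabeled vertex $v_i$ with minimum $r$-value among unlabeled vertices and give it label 1; (2) let $v_j$ be the vertex of $N[v_i]$ with maximum $r$-value (possibly already labeled, possibly $v_j=v_i$) and (re)label $v_j$ with label 2; (3) give label 3 to every still unlabeled vertex of $N(v_j)$. $V_k$ is the set of vertices whose final label is $k$. Order $V_2$ as $w_1,\dots,w_{|V_2|}$ with $r(w_1)<\dots<r(w_{|V_2|})$. Define $C_1=\{v: r(v)\le r(w_1)\}$, $C_i=\{v: r(w_{i-1})<r(v)\le r(w_i)\}$ for $2\le i\le |V_2|-1$, and $C_{|V_2|}=\{v: r(w_{|V_2|-1})<r(v)\}$ (if $|V_2|=1$, $C_1=V(G)$). $N[v]$, $N(v)$ are closed and open neighbourhoods. A set $D$ is a dominating set if every vertex is in $D$ or adjacent to a vertex of $D$. *)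

(* Defs.v *)
From HB Require Import structures.
From mathcomp Require Import all_boot all_order all_algebra.
Set Implicit Arguments. Unset Strict Implicit. Unset Printing Implicit Defensive.
Import Order.TTheory GRing.Theory Num.Theory.
Local Open Scope ring_scope.

Section IntervalGraph.
Variables (R : realDomainType) (V : finType) (l r : V -> R).

Definition meets (u v : V) : bool := (l u <= r v) && (l v <= r u).
Definition iadj (u v : V) : bool := (u != v) && meets u v.
Definition cnbhd (v : V) : {set V} := [set u | meets v u].
Definition onbhd (v : V) : {set V} := [set u | iadj v u].

Definition dominating (D : {set V}) : Prop :=
  forall v, v \in D \/ exists2 u, u \in D & iadj u v.

Definition connected_graph : Prop := forall u v, connect iadj u v.

(* Labels: 0 = unlabeled, 1, 2, 3. One round of the labeling procedure. *)
Definition label_step (lab : {ffun V -> nat}) : {ffun V -> nat} :=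
  match [pick v | (lab v == 0%N) &&
                  [forall u, (lab u == 0%N) ==> (r v <= r u)]] with
  | None => lab
  | Some vi =>
    match [pick v | (v \in cnbhd vi) &&
                    [forall u, (u \in cnbhd vi) ==> (r u <= r v)]] with
    | None => lab
    | Some vj =>
      [ffun u => if u == vj then 2%N
                 else if u == vi then 1%N
                 else if (lab u == 0%N) && (u \in onbhd vj) then 3%N
                 else lab u]
    end
  end.

(* Each round labels at least one new vertex, so #|V| rounds finish. *)
Definition final_labels : {ffun V -> nat} :=
  iter #|V| label_step [ffun => 0%N].

Definition V_lab (k : nat) : {set V} := [set v | final_labels v == k].

Definition rV2 : seq R := sort <=%R [seq r w | w in V_lab 2].
Definition rw (i : nat) : R := nth 0 rV2 i.-1.   (* r(w_i), 1-based *)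

(* C_i, 1-based, 1 <= i <= |V2| *)
Definition Cblock (i : nat) : {set V} :=
  let k := #|V_lab 2| in
  if k == 1%N then [set: V]
  else if i == 1%N then [set v | r v <= rw 1]
  else if i == k then [set v | rw k.-1 < r v]
  else [set v | (rw i.-1 < r v) && (r v <= rw i)].

End IntervalGraph.

(* Main.v *)
Require Import Defs.
From HB Require Import structures.
From mathcomp Require Import all_boot all_order all_algebra.
Import Order.TTheory GRing.Theory Num.Theory.
Local Open Scope ring_scope.

Section Proof.
Variables (R : realDomainType) (V : finType) (l r : V -> R).
Hypothesis hlr : forall v, l v <= r v.
Hypothesis hr : injective r.

Lemma meets_refl v : meets l r v v.
Proof. by rewrite /meets hlr. Qed.
Lemma meets_sym u v : meets l r u v = meets l r v u.
Proof. by rewrite /meets andbC. Qed.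

Definition Inv (lab : {ffun V -> nat}) :=
 [/\ forall v, lab v != 0%N -> exists w, lab w == 2%N /\ meets l r w v,
     forall w, lab w == 2%N -> exists a,
        (forall u, meets l r a u -> r u <= r w) /\
        (forall w', lab w' == 2%N -> r w' < r w -> r w' < l a)
   & forall w v, lab w == 2%N -> lab v == 0%N -> r w < l v ].

Lemma step_inv lab : Inv lab -> Inv (label_step l r lab).
Proof.
case=> Ha Hb Hc; rewrite /label_step.
case: pickP => [vi /andP[vi0 /forallP vimin]|_]; last by split.
case: pickP => [vj /andP[vjN /forallP vjmax]|_]; last by split.
have hvi u : lab u == 0%N -> r vi <= r u by move=> H; exact: (implyP (vimin u) H).
have hvj u : meets l r vi u -> r u <= r vj.
  by move=> H; apply: (implyP (vjmax u)); rewrite inE.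
have mvj : meets l r vi vj by move: vjN; rewrite inE.
have key1 w : lab w == 2%N -> r w < l vi by move=> H; exact: Hc.
have key2 w : lab w == 2%N -> r w < r vj.
  move=> H; apply: (lt_le_trans (key1 w H)); apply: (le_trans (hlr vi)).
  exact/hvj/meets_refl.
set lab' := [ffun _ => _].
have E2 u : (lab' u == 2%N) = (u == vj) || (lab u == 2%N).
  rewrite /lab' ffunE; have [->|nj] := eqVneq u vj; first by rewrite eqxx.
  rewrite /=; have [->|ni] := eqVneq u vi; first by rewrite (eqP vi0).
  by case: ifP => // /andP[/eqP -> _].
have E0 u : lab' u == 0%N -> [/\ lab u == 0%N, u != vj, u != vi & u \notin onbhd l r vj].
  rewrite /lab' ffunE; have [//|nj] := eqVneq u vj.
  have [//|ni] := eqVneq u vi.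
  case: ifP => // /negbT; rewrite negb_and => /orP[H|H] H2; first by rewrite H2 in H.
  by split.
split.
- move=> v; rewrite /lab' ffunE.
  have [->|nvj] := eqVneq v vj; first by exists vj; rewrite E2 eqxx meets_refl.
  have [->|nvi] := eqVneq v vi; first by exists vj; rewrite E2 eqxx meets_sym.
  case: ifP => [/andP[_]|_ H].
    by rewrite inE => /andP[_ Hm] _; exists vj; rewrite E2 eqxx.
  by have [w [Hw Hm]] := Ha v H; exists w; rewrite E2 Hw orbT.
- move=> w; rewrite E2 => /orP[/eqP ->|Hw].
    exists vi; split=> // w'; rewrite E2 => /orP[/eqP ->|Hw']; first by rewrite ltxx.
    by move=> _; exact: key1.
  have [a [Ha1 Ha2]] := Hb w Hw; exists a; split=> // w'; rewrite E2 => /orP[/eqP ->|Hw'].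
    by move=> H; have := lt_trans H (key2 w Hw); rewrite ltxx.
  exact: Ha2.
- move=> w v; rewrite E2 => Hw /E0 [v0 nvj nvi nadj].
  case/orP: Hw => [/eqP ->|Hw]; last exact: Hc.
  have rv : r vi < r v.
    by rewrite lt_neqAle hvi // andbT; apply/eqP => /hr/eqP; rewrite eq_sym (negbTE nvi).
  move: nadj; rewrite inE /iadj eq_sym nvj /= /meets.
  move: mvj; rewrite /meets => /andP[_ h1].
  rewrite (le_trans h1 (ltW rv)) /= => h2.
  by rewrite ltNge h2.
Qed.

Lemma step0 (lab : {ffun V -> nat}) v : label_step l r lab v == 0%N -> lab v == 0%N.
Proof.
rewrite /label_step; case: pickP => [vi /andP[vi0 _]|_] //.
case: pickP => [vj _|_] //; rewrite ffunE.
have [//|nj] := eqVneq v vj; have [//|ni] := eqVneq v vi.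
by case: ifP => // /andP[].
Qed.

Definition unl (lab : {ffun V -> nat}) := [set v | lab v == 0%N].

Lemma step_prog (lab : {ffun V -> nat}) v0 : lab v0 == 0%N ->
  (#|unl (label_step l r lab)| < #|unl lab|)%N.
Proof.
move=> Hv0; apply: proper_card; apply/properP; split.
  by apply/subsetP => v; rewrite !inE; exact: step0.
rewrite /label_step; case: pickP => [vi /andP[vi0 _]|Hn].
  case: pickP => [vj _|Hn2].
    exists vi; first by rewrite inE.
    by rewrite inE ffunE eqxx; case: (vi == vj).
  exfalso.
  case: (@arg_maxP _ _ _ vi (fun v => v \in cnbhd l r vi) r).
    by rewrite inE meets_refl.
  move=> vm Hvm Hmax; have := Hn2 vm; rewrite Hvm /=.
  by move/negbT/forallPn => [x]; rewrite negb_imply => /andP[Hx /negP]; apply; exact: Hmax.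
exfalso.
case: (@arg_minP _ _ _ v0 (fun v => lab v == 0%N) r Hv0).
move=> vm Hvm Hmin; have := Hn vm; rewrite Hvm /=.
by move/negbT/forallPn => [x]; rewrite negb_imply => /andP[Hx /negP]; apply; exact: Hmin.
Qed.

Lemma iter_inv n : Inv (iter n (label_step l r) [ffun => 0%N]).
Proof.
elim: n => [|n IH] /=; last exact: step_inv.
by split=> [v|w|w v]; rewrite ffunE.
Qed.

Lemma iter_unl n : (#|unl (iter n (label_step l r) [ffun => 0%N])| <= #|V| - n)%N.
Proof.
elim: n => [|n IH] /=; first by rewrite subn0 max_card.
set lab := iter n _ _ in IH *.
have [/set0Pn [v0]|E] := boolP (unl lab != set0).
  rewrite inE => Hv0; have := @step_prog lab v0 Hv0; rewrite subnS; move: IH.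
  case: (#|unl lab|) => // k; case: (#|V| - n)%N => // m /=; rewrite !ltnS.
  by move=> H1 H2; apply: leq_trans H2 H1.
rewrite negbK in E.
have -> : unl (label_step l r lab) = set0.
  by apply/eqP; rewrite -subset0 -(eqP E); apply/subsetP => v; rewrite !inE; exact: step0.
by rewrite cards0.
Qed.

Lemma final_all v : final_labels l r v != 0%N.
Proof.
apply/negP => H; have := iter_unl #|V|; rewrite subnn leqn0 cards_eq0 => /eqP E.
have : v \in unl (final_labels l r) by rewrite inE.
by rewrite /final_labels E inE.
Qed.

Local Notation k := #|V_lab l r 2|.
Local Notation V2 := (V_lab l r 2).

Lemma size_rV2 : size (rV2 l r) = k.
Proof. by rewrite /rV2 size_sort size_map -cardE. Qed.

Lemma sorted_rV2 : sorted <%R (rV2 l r).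
Proof.
rewrite lt_sorted_uniq_le sort_uniq sort_sorted ?andbT; last exact: le_total.
by rewrite map_inj_uniq ?enum_uniq.
Qed.

Lemma mem_rV2 x : x \in rV2 l r -> exists2 w, w \in V2 & r w = x.
Proof.
by rewrite /rV2 mem_sort => /mapP [w]; rewrite mem_enum => Hw ->; exists w.
Qed.

Lemma rw_in i : (1 <= i <= k)%N -> exists2 w, w \in V2 & r w = rw l r i.
Proof.
case/andP=> h1 h2; apply: mem_rV2; apply: mem_nth; rewrite size_rV2.
by case: i h1 h2.
Qed.

Lemma rw_lt i j : (1 <= i)%N -> (i < j)%N -> (j <= k)%N -> rw l r i < rw l r j.
Proof.
move=> h1 h2 h3; rewrite /rw.
have H := @sorted_ltn_nth _ <%R (@lt_trans _ R) 0 _ sorted_rV2; apply: H.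
- rewrite -topredE /= size_rV2; case: i h1 h2 => // i _ h2 /=.
  by apply: leq_trans h3; apply: leq_trans h2.
- by rewrite -topredE /= size_rV2; case: j h2 h3.
- by case: i h1 h2 => // i _; case: j h3.
Qed.

Lemma rw_le i j : (1 <= i)%N -> (i <= j)%N -> (j <= k)%N -> rw l r i <= rw l r j.
Proof.
move=> h1; rewrite leq_eqVlt => /orP[/eqP -> //|h2] h3.
exact/ltW/rw_lt.
Qed.

Lemma Cin i u : (1 <= i <= k)%N -> r u <= rw l r i ->
  ((1 < i)%N -> rw l r i.-1 < r u) -> u \in Cblock l r i.
Proof.
case/andP=> h1 h2 H1 H2; rewrite /Cblock.
case: eqP => [_|nk1]; first by rewrite inE.
case: eqP => [i1|ni1]; first by rewrite inE -i1.
have hi : (1 < i)%N by rewrite ltn_neqAle h1 andbT eq_sym; apply/eqP.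
case: eqP => [ik|nik]; first by rewrite inE -ik H2.
by rewrite inE H1 H2.
Qed.

Lemma Cout i u : (1 <= i <= k)%N -> u \in Cblock l r i ->
  ((i < k)%N -> r u <= rw l r i) /\ ((1 < i)%N -> rw l r i.-1 < r u).
Proof.
case/andP=> h1 h2; rewrite /Cblock.
case: eqP => [k1|nk1].
  have i1 : i = 1%N by apply/eqP; rewrite eqn_leq h1 andbT; move: h2; rewrite k1.
  by move=> _; rewrite i1 k1; split.
case: eqP => [i1|ni1]; first by rewrite inE i1 => H; split.
case: eqP => [ik|nik]; rewrite inE.
  by move=> H; split=> h; [rewrite ik ltnn in h | rewrite ik].
by case/andP=> H1 H2; split.
Qed.

Lemma part1 (D : {set V}) : dominating l r D ->
  forall i : nat, (1 <= i <= k)%N -> (0 < #|D :&: Cblock l r i|)%N.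
Proof.
move=> HD i hi; have [w Hw Ew] := @rw_in i hi.
have [_ Hb _] := iter_inv #|V|; rewrite -/(final_labels l r) in Hb.
have Fw : final_labels l r w == 2%N by move: Hw; rewrite inE.
have [a [A1 A2]] := Hb w Fw.
have [u Hu Mu] : exists2 u, u \in D & meets l r a u.
  case: (HD a) => [Ha|[u Hu]]; first by exists a => //; exact: meets_refl.
  by rewrite /iadj meets_sym => /andP[_ M]; exists u.
apply/card_gt0P; exists u; rewrite inE Hu /=; apply: Cin => //.
  by rewrite -Ew; exact: A1.
move=> hi1; case/andP: hi => h1 h2.
have hi' : (1 <= i.-1 <= k)%N.
  by apply/andP; split; [case: i hi1 {Ew h1 h2} => [|[|]] | apply: leq_trans (leq_pred i) h2].
have [w' Hw' Ew'] := @rw_in _ hi'.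
rewrite -Ew'; apply: (lt_le_trans (A2 w' _ _)).
- by move: Hw'; rewrite inE.
- rewrite Ew' Ew; apply: rw_lt => //; first by case/andP: hi'.
  by rewrite ltn_predL.
- by move: Mu; rewrite /meets => /andP[].
Qed.

Lemma part2 : dominating l r V2.
Proof.
move=> v; have [Ha _ _] := iter_inv #|V|; rewrite -/(final_labels l r) in Ha.
have [w [Hw Mw]] := Ha v (final_all v).
have [<-|nwv] := eqVneq w v; first by left; rewrite inE.
by right; exists w; rewrite ?inE // /iadj nwv.
Qed.

Lemma part3 (D : {set V}) : dominating l r D -> (k <= #|D|)%N.
Proof.
move=> HD.
have H : forall x : 'I_k, exists u, u \in D :&: Cblock l r x.+1.
  move=> x; have : (0 < #|D :&: Cblock l r x.+1|)%N by apply: part1 => //=.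
  by case/card_gt0P => u Hu; exists u.
have [g Hg] := fin_all_exists H.
have ginj : injective g.
  have key (x y : 'I_k) : (x < y)%N -> g x <> g y.
    move=> xy E; have := Hg x; have := Hg y; rewrite E !inE => /andP[_ Cy] /andP[_ Cx].
    have [Cx1 _] := @Cout x.+1 _ (ltn_ord x) Cx.
    have [_ Cy2] := @Cout y.+1 _ (ltn_ord y) Cy.
    have := Cx1 (leq_ltn_trans xy (ltn_ord y)); have := Cy2 (leq_ltn_trans (leq0n x) xy).
    move=> h1 h2; have := lt_le_trans h1 h2 => /=.
    by rewrite ltNge (@rw_le x.+1 y) // ltnW.
  move=> x y E; case: (ltngtP x y) => [xy|yx|/val_inj //].
    by case: (key _ _ xy E).
  by case: (key _ _ yx (esym E)).
rewrite -{1}(card_ord k) -cardsT -(card_imset _ ginj).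
apply: subset_leq_card; apply/subsetP => v /imsetP [x _ ->].
by have := Hg x; rewrite inE => /andP[].
Qed.
End Proof.

Theorem lemma12 (R : realDomainType) (V : finType) (l r : V -> R)
  (hlr : forall v, l v <= r v)
  (hr : injective r)
  (hconn : connected_graph l r) :
  (forall D : {set V}, dominating l r D ->
     forall i : nat, (1 <= i <= #|V_lab l r 2|)%N ->
       (0 < #|D :&: Cblock l r i|)%N)
  /\ dominating l r (V_lab l r 2)
  /\ (forall D : {set V}, dominating l r D -> (#|V_lab l r 2| <= #|D|)%N).
Proof.
split; first exact: part1.
split; first exact: part2.
exact: part3.
Qed.
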